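(* Let $N_1,N_2\geqslant 1$ be real numbers and let $\alpha,\beta$ be real numbers with $0<\alpha,\beta\leqslant 1$. Define $$T(N_1,N_2,\alpha,\beta)=\sum_{\substack{n_1\sim N_1,\ n_2\sim N_2\\ n_1\neq n_2}}\frac{1}{|n_1^{\alpha}-n_2^{\alpha}|^{\beta}},$$ where $n_1,n_2$ range over integers. Then $$T(N_1,N_2,\alpha,\beta)\ll (N_1N_2)^{1-\alpha\beta/2}\log N_1\log N_2.$$
   Context: The notation $n\sim N$ means $N<n\leqslant 2N$. *)

(* Defs.v *)
From HB Require Import structures.
From mathcomp Require Import all_boot all_order all_algebra.
From mathcomp Require Import all_classical all_reals all_analysis.
Set Implicit Arguments. Unset Strict Implicit. Unset Printing Implicit Defensive.
Import Order.TTheory GRing.Theory Num.Theory.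
Local Open Scope ring_scope.

(* n ~ N means N < n <= 2N.  Every such natural number n satisfies
   n < Num.truncn (2N) + 1, so summing over 0 <= n < truncn(2N)+1 with the
   condition N < n <= 2N ranges exactly over the integers n ~ N (for N >= 1
   these are positive, so negative integers never occur). *)
Definition simN {R : realType} (N : R) (n : nat) : bool :=
  (N < n%:R) && (n%:R <= 2 * N).

Definition Tsum {R : realType} (N1 N2 a b : R) : R :=
  \sum_(0 <= n1 < (Num.truncn (2 * N1)).+1 | simN N1 n1)
    \sum_(0 <= n2 < (Num.truncn (2 * N2)).+1 | simN N2 n2 && (n1 != n2))
      (`| (n1%:R `^ a) - (n2%:R `^ a) | `^ b)^-1.

(* Main.v *)
Require Import Defs.
From HB Require Import structures.
From mathcomp Require Import all_boot all_order all_algebra.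
From mathcomp Require Import all_classical all_reals all_analysis.
From mathcomp Require Import ring lra.
Import Order.TTheory GRing.Theory Num.Theory.
Local Open Scope ring_scope.

Section S.
Variable R : realType.

Lemma bern (a t : R) : 0 < a <= 1 -> 0 <= t -> t `^ a <= a * t + (1 - a).
Proof.
move=> /andP[a0 a1] t0.
have [->|a1'] := eqVneq a 1.
  by rewrite powRr1 // mul1r subrr addr0.
have a1s : a < 1 by rewrite lt_neqAle a1' a1.
have := @conjugate_powR R (t `^ a) 1 a^-1 (1 - a)^-1 (powR_ge0 _ _) ler01.
rewrite invr_gt0 a0 invr_gt0 subr_gt0 a1s !invrK => /(_ isT isT).
rewrite addrC subrK => /(_ erefl).
by rewrite mulr1 -powRrM mulfV ?gt_eqF // powRr1 // powR1 mul1r (mulrC t).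
Qed.

Lemma diffpow (a x y : R) : 0 < a <= 1 -> 0 < x -> x <= y ->
  a * (y - x) <= y `^ (1 - a) * (y `^ a - x `^ a).
Proof.
move=> ha x0 xy.
have y0 : 0 < y by apply: lt_le_trans xy.
have ht : x = (x / y) * y by rewrite divfK ?gt_eqF.
have t0 : 0 <= x / y by rewrite divr_ge0 ?ltW.
have hb := @bern a (x / y) ha t0.
have ya : 0 < y `^ a by rewrite powR_gt0.
have yy : y `^ (1 - a) * y `^ a = y.
  rewrite -powRD; last by apply/implyP => _; rewrite gt_eqF.
  by rewrite subrK powRr1 // ltW.
have hx : x `^ a <= (a * (x / y) + (1 - a)) * y `^ a.
  rewrite {1}ht (powRM _ t0 (ltW y0)); by rewrite ler_pM2r.
have -> : a * (y - x) = y `^ (1 - a) * (y `^ a * (a * (1 - x / y))).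
  by rewrite mulrA yy; field; rewrite gt_eqF.
apply: ler_wpM2l; first exact: powR_ge0.
move: hx; set u := y `^ a; set s := x / y; set v := x `^ a; lra.
Qed.

Lemma lepow (r x y : R) : 0 <= r -> 0 <= x -> x <= y -> x `^ r <= y `^ r.
Proof.
move=> r0 x0 xy; apply: ge0_ler_powR => //; rewrite nnegrE //.
exact: le_trans xy.
Qed.

Lemma ltpow (r x y : R) : 0 < r -> 0 <= x -> x < y -> x `^ r < y `^ r.
Proof.
move=> r0 x0 xy; apply: gt0_ltr_powR => //; rewrite nnegrE //.
exact: le_trans (ltW xy).
Qed.

Lemma termb (a b V x y : R) : 0 < a <= 1 -> 0 < b <= 1 -> 0 < x -> 0 < y ->
  x != y -> x <= V -> y <= V ->
  (`|x `^ a - y `^ a| `^ b)^-1 <= (a `^ b)^-1 * V `^ (1 - a * b) * (`|x - y|)^-1.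
Proof.
move=> ha hb.
wlog xy : x y / x < y.
  move=> H x0 y0 nxy xV yV.
  have [lt|gt|eq] := ltgtP x y; first exact: H.
    by rewrite distrC (distrC x); apply: H => //; rewrite eq_sym.
  by rewrite eq eqxx in nxy.
move=> x0 y0 _ xV yV.
case/andP: ha => a0 a1; case/andP: hb => b0 b1.
have V0 : 0 < V by apply: lt_le_trans yV.
set D := y `^ a - x `^ a.
have D0 : 0 < D by rewrite subr_gt0 ltpow ?ltW.
have -> : `|x `^ a - y `^ a| = D by rewrite distrC gtr0_norm.
set d := y - x.
have d0 : 0 < d by rewrite subr_gt0.
have -> : `|x - y| = d by rewrite distrC gtr0_norm.
have h1 : a * d <= V `^ (1 - a) * D.
  have := @diffpow a x y; rewrite a0 a1 => /(_ isT x0 (ltW xy)) h.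
  apply: le_trans h _.
  rewrite ler_pM2r //.
  by apply: lepow => //; [rewrite subr_ge0 | exact: ltW].
have h2 : a `^ b * d `^ b <= V `^ ((1 - a) * b) * D `^ b.
  rewrite -powRM ?(ltW a0) ?(ltW d0) // powRrM -powRM ?powR_ge0 ?(ltW D0) //.
  apply: lepow; rewrite ?(ltW b0) //.
  by rewrite mulr_ge0 ?(ltW a0) ?(ltW d0).
have h3 : d <= d `^ b * V `^ (1 - b).
  have e : d = d `^ b * d `^ (1 - b).
    rewrite -powRD; last by apply/implyP => _; rewrite gt_eqF.
    by rewrite addrC subrK powRr1 // ltW.
  rewrite {1}e ler_pM2l ?powR_gt0 //.
  apply: lepow; [by rewrite subr_ge0 | exact: ltW | rewrite /d; lra].
have h4 : a `^ b * d <= V `^ (1 - a * b) * D `^ b.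
  have -> : 1 - a * b = (1 - a) * b + (1 - b) by ring.
  rewrite powRD; last by apply/implyP => _; rewrite gt_eqF.
  apply: le_trans (ler_wpM2l (powR_ge0 _ _) h3) _.
  rewrite mulrA; apply: le_trans (ler_wpM2r (powR_ge0 _ _) h2) _.
  by rewrite -!mulrA ler_wpM2l ?powR_ge0 // mulrC.
have ab0 : 0 < a `^ b by rewrite powR_gt0.
have Db0 : 0 < D `^ b by rewrite powR_gt0.
rewrite -subr_ge0.
have -> : (a `^ b)^-1 * V `^ (1 - a * b) / d - (D `^ b)^-1 =
   (V `^ (1 - a * b) * D `^ b - a `^ b * d) / (a `^ b * d * D `^ b).
  by field; rewrite !gt_eqF.
by rewrite divr_ge0 ?subr_ge0 // !mulr_ge0 // ltW.
Qed.

Definition hh (n1 n2 : nat) : R :=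
  if n1 == n2 then 0 else (`|n1%:R - n2%:R|)^-1.
Definition HH (n : nat) : R := \sum_(0 <= k < n) (k.+1%:R)^-1.

Lemma HHS n : HH n.+1 = HH n + (n.+1%:R)^-1.
Proof. by rewrite /HH big_nat_recr. Qed.

Lemma HH_ge0 n : 0 <= HH n.
Proof. by rewrite /HH sumr_ge0 // => i _; rewrite invr_ge0. Qed.

Lemma HH_le n m : (n <= m)%N -> HH n <= HH m.
Proof.
elim: m => [|m IH]; first by rewrite leqn0 => /eqP ->.
rewrite leq_eqVlt => /orP[/eqP -> //|]; rewrite ltnS => /IH h.
by rewrite HHS; apply: le_trans h _; rewrite lerDl invr_ge0.
Qed.

Lemma hh_ge0 n1 n2 : 0 <= hh n1 n2.
Proof. by rewrite /hh; case: ifP => // _; rewrite invr_ge0. Qed.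

Lemma hsum U n1 : \sum_(0 <= i < U) hh n1 i <= HH n1 + HH U.
Proof.
elim: U n1 => [|U IH] n1.
  by rewrite big_geq // addr_ge0 // HH_ge0.
rewrite big_nat_recl //.
case: n1 => [|m].
  rewrite /hh eqxx add0r /HH [X in X + _]big_geq // add0r.
  apply: (@le_trans _ _ (HH U)); last exact: HH_le.
  rewrite /HH; apply: ler_sum => i _.
  by rewrite sub0r normrN ger0_norm.
have -> : \sum_(0 <= i < U) hh m.+1 i.+1 = \sum_(0 <= i < U) hh m i.
  apply: eq_bigr => i _; rewrite /hh eqSS.
  case: ifP => // _; rewrite !mulrS.
  by have -> : (1 + m%:R - (1 + i%:R) : R) = m%:R - i%:R by ring.
apply: le_trans (lerD (lexx _) (IH m)) _.
rewrite HHS /hh /= subr0 ger0_norm // addrA (addrC _ (HH m)).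
by rewrite lerD2l HHS lerDl invr_ge0.
Qed.

Lemma ln_step m : (m.+2%:R)^-1 <= ln (m.+2%:R : R) - ln (m.+1%:R).
Proof.
have p2 : (0 : R) < m.+2%:R by rewrite ltr0n.
have p1 : (0 : R) < m.+1%:R by rewrite ltr0n.
have := @le_ln1Dx R (- (m.+2%:R)^-1).
have -> : 1 + - (m.+2%:R : R)^-1 = m.+1%:R * (m.+2%:R)^-1.
  rewrite -[in LHS](natr1 m.+1); field.
  by rewrite -natrD add2n gt_eqF.
have e : ln (m.+1%:R / m.+2%:R : R) = ln (m.+1%:R : R) - ln (m.+2%:R : R).
  rewrite lnM ?posrE ?invr_gt0 // lnV ?posrE //.
rewrite e.
move=> h; have hh1 : -1 < - (m.+2%:R : R)^-1.
  by rewrite ltrN2 invf_lt1 // ltr1n.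
by have := h hh1; rewrite -lerN2 opprB.
Qed.

Lemma HH_ln n (X : R) : 1 <= X -> n%:R <= X -> HH n <= 1 + ln X.
Proof.
move=> X1 nX.
have ln0 : 0 <= ln X by rewrite ln_ge0.
case: n nX => [|m] nX.
  by rewrite /HH big_geq // addr_ge0.
suff h : HH m.+1 <= 1 + ln (m.+1%:R).
  apply: le_trans h _; rewrite lerD2l ler_ln ?posrE ?ltr0n //.
  exact: lt_le_trans ltr01 X1.
elim: m {nX} => [|m IH].
  by rewrite HHS /HH big_geq // add0r ln1 addr0 invr1.
rewrite HHS; apply: le_trans (lerD IH (ln_step m)) _.
by rewrite addrA addrAC addrK.
Qed.

Lemma Tsym (N1 N2 a b : R) : Tsum N1 N2 a b = Tsum N2 N1 a b.
Proof.
rewrite /Tsum (exchange_big_dep_nat (simN N2)); last first.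
  by move=> i j _ _ _ /andP[].
apply: eq_bigr => n2 h2.
apply: eq_big => [n1|n1 _]; first by rewrite h2 /= eq_sym.
by rewrite distrC.
Qed.

Lemma sum_filter_le (P : pred nat) (F : nat -> R) m n :
  (forall i, 0 <= F i) -> \sum_(m <= i < n | P i) F i <= \sum_(m <= i < n) F i.
Proof.
move=> F0; rewrite [X in X <= _]big_mkcond /=; apply: ler_sum => i _.
by case: ifP.
Qed.

Definition Cst (a b : R) := 12 * (a `^ b)^-1 * ((1 + ln 3) / ln 2 + 1) / ln 2.

Lemma final_num (a b N1 N2 : R) : 0 < a <= 1 -> 0 < b <= 1 -> 2 <= N1 -> N1 <= N2 ->
  3 * N1 * ((a `^ b)^-1 * (2 * N2) `^ (1 - a * b) *
    ((1 + ln (3 * N2)) + (1 + ln (3 * N2))))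
  <= Cst a b * (N1 * N2) `^ (1 - a * b / 2) * ln N1 * ln N2.
Proof.
move=> /andP[a0 a1] /andP[b0 b1] N12 N1N2.
set e := a * b.
have e0 : 0 < e by rewrite mulr_gt0.
have e1 : e <= 1 by rewrite mulr_ile1 // ltW.
have N1p : 0 < N1 by apply: lt_le_trans N12; rewrite ltr0n.
have N2p : 0 < N2 by apply: lt_le_trans N1N2.
have N1n := ltW N1p; have N2n := ltW N2p.
have l2 : 0 < ln (2 : R) by rewrite ln_gt0 // ltr1n.
have L1 : ln 2 <= ln N1 by rewrite ler_ln ?posrE ?ltr0n.
have L2 : ln 2 <= ln N2 by rewrite ler_ln ?posrE ?ltr0n //; apply: le_trans N1N2.
have l3 : 0 <= ln (3 : R) by rewrite ln_ge0 // ler1n.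
set A := (a `^ b)^-1.
have A0 : 0 < A by rewrite invr_gt0 powR_gt0.
pose c : R := (1 + ln 3) / ln 2 + 1.
have hW : (2 * N2) `^ (1 - e) <= 2 * N2 `^ (1 - e).
  rewrite powRM ?ler0n // ler_pM2r ?powR_gt0 //.
  by apply: ler1_powR; [rewrite ler1n | rewrite gerBl ltW].
have hL : 1 + ln (3 * N2) <= c * ln N2.
  rewrite lnM ?posrE ?ltr0n // /c mulrDl mul1r addrA lerD2r.
  rewrite mulrAC ler_pdivlMr //.
  by apply: ler_wpM2l => //; rewrite addr_ge0.
have hP : N1 * N2 `^ (1 - e) <= (N1 * N2) `^ (1 - e / 2).
  rewrite powRM //.
  have eN1 : N1 = N1 `^ (1 - e / 2) * N1 `^ (e / 2).
    rewrite -powRD; last by apply/implyP => _; rewrite gt_eqF.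
    by rewrite subrK powRr1 // ltW.
  rewrite {1}eN1.
  have -> : N2 `^ (1 - e / 2) = N2 `^ (e / 2) * N2 `^ (1 - e).
    rewrite -powRD; last by apply/implyP => _; rewrite gt_eqF.
    by congr (_ `^ _); field.
  rewrite -mulrA ler_pM2l ?powR_gt0 // ler_pM2r ?powR_gt0 //.
  by apply: lepow => //; rewrite divr_ge0 // ltW.
have hl : 1 <= ln N1 / ln 2 by rewrite ler_pdivlMr // mul1r.
have c0 : 0 < c by rewrite /c ltr_wpDl // divr_ge0 ?addr_ge0 // ltW.
have lN2 : 0 < ln N2 by apply: lt_le_trans L2.
have L0 : 0 <= ln (3 * N2).
  rewrite ln_ge0 //; apply: le_trans (_ : 1 <= 3 * 1) _; first by rewrite mulr1 ler1n.
  rewrite ler_pM2l ?ltr0n //; apply: le_trans N1N2; apply: le_trans N12; by rewrite ler1n.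
set W := (2 * N2) `^ (1 - e); set L := ln (3 * N2); set P := N2 `^ (1 - e).
set Q := (N1 * N2) `^ (1 - e / 2).
have -> : 3 * N1 * (A * W * (1 + L + (1 + L))) = (6 * A) * (N1 * W) * (1 + L) by ring.
apply: (@le_trans _ _ ((6 * A) * (N1 * (2 * P)) * (c * ln N2))).
  apply: ler_pM.
  - by rewrite !mulr_ge0 // ?powR_ge0 // ltW.
  - by rewrite addr_ge0.
  - by rewrite ler_pM2l ?mulr_gt0 // ler_pM2l.
  - exact: hL.
apply: (@le_trans _ _ ((12 * A * c) * Q * ln N2 * (ln N1 / ln 2))).
  have -> : 6 * A * (N1 * (2 * P)) * (c * ln N2) = (12 * A * c) * (N1 * P) * ln N2 * 1 by ring.
  apply: ler_pM => //.
  - by rewrite !mulr_ge0 // ?powR_ge0 // ltW.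
  - by rewrite ler_pM2r // ler_pM2l // !mulr_gt0.
rewrite /Cst -/A -/c le_eqVlt; apply/orP; left; apply/eqP.
by field; rewrite gt_eqF.
Qed.

Lemma main_le (a b N1 N2 : R) : 0 < a <= 1 -> 0 < b <= 1 -> 2 <= N1 -> N1 <= N2 ->
  Tsum N1 N2 a b <= Cst a b * (N1 * N2) `^ (1 - a * b / 2) * ln N1 * ln N2.
Proof.
move=> ha hb N12 N1N2.
apply: (le_trans _ (final_num a b N1 N2 ha hb N12 N1N2)).
have N1p : 0 < N1 by apply: lt_le_trans N12; rewrite ltr0n.
have N2p : 0 < N2 by apply: lt_le_trans N1N2.
have N1n := ltW N1p; have N2n := ltW N2p.
set K := (a `^ b)^-1 * (2 * N2) `^ (1 - a * b).
have K0 : 0 <= K by rewrite mulr_ge0 ?powR_ge0 // invr_ge0 powR_ge0.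
set L := ln (3 * N2).
have X1 : 1 <= 3 * N2.
  apply: le_trans (_ : 1 <= 3 * 1) _; first by rewrite mulr1 ler1n.
  rewrite ler_pM2l ?ltr0n //; apply: le_trans N1N2; apply: le_trans N12; by rewrite ler1n.
rewrite /Tsum.
apply: (@le_trans _ _ (\sum_(0 <= n1 < (Num.truncn (2 * N1)).+1 | simN N1 n1)
    (K * (1 + L + (1 + L))))).
  apply: ler_sum => n1 /andP[hn1a hn1b].
  have n1p : 0 < (n1%:R : R) by apply: lt_trans hn1a.
  apply: (@le_trans _ _ (\sum_(0 <= n2 < (Num.truncn (2 * N2)).+1 |
      simN N2 n2 && (n1 != n2)) K * hh n1 n2)).
    apply: ler_sum => n2 /andP[/andP[hn2a hn2b] ne].
    rewrite /hh (negbTE ne) /K.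
    apply: termb => //.
    - exact: lt_trans hn2a.
    - by rewrite eqr_nat.
    - apply: le_trans hn1b _; by rewrite ler_pM2l // ltr0n.
  apply: le_trans (sum_filter_le _ _ _ _ _) _.
    by move=> i; rewrite mulr_ge0 // hh_ge0.
  rewrite -mulr_sumr; apply: ler_wpM2l => //.
  apply: le_trans (hsum _ _) _.
  apply: lerD; apply: HH_ln => //.
  - apply: le_trans hn1b _; apply: (@le_trans _ _ (2 * N2)).
      by rewrite ler_pM2l // ltr0n.
    by rewrite ler_pM2r // ler_nat.
  - apply: le_trans (_ : (2 * N2) + 1 <= _).
      by rewrite -natr1 lerD2r truncn_le mulr_ge0.
    have : 1 <= N2 by apply: le_trans N1N2; apply: le_trans N12; rewrite ler1n.
    lra.
have C0 : 0 <= K * (1 + L + (1 + L)).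
  by rewrite mulr_ge0 // addr_ge0 // addr_ge0 // ln_ge0.
apply: le_trans (sum_filter_le _ _ _ _ _) _; first by [].
rewrite sumr_const_nat subn0 -[_ *+ _]mulr_natl.
apply: ler_pM => //.
rewrite -natr1.
have : (Num.truncn (2 * N1))%:R <= 2 * N1 by rewrite truncn_le mulr_ge0.
have : 1 <= N1 by apply: le_trans N12; rewrite ler1n.
lra.
Qed.
End S.
Theorem lemma2p11 (R : realType) (a b : R) :
  0 < a <= 1 -> 0 < b <= 1 ->
  exists C : R, 0 < C /\
    forall N1 N2 : R, 2 <= N1 -> 2 <= N2 ->
      Tsum N1 N2 a b <=
      C * ((N1 * N2) `^ (1 - a * b / 2)) * ln N1 * ln N2.
Proof.
move=> ha hb; exists (@Cst R a b); split.
  have l2 : 0 < ln (2 : R) by rewrite ln_gt0 // ltr1n.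
  have l3 : 0 <= ln (3 : R) by rewrite ln_ge0 // ler1n.
  rewrite /Cst !mulr_gt0 ?invr_gt0 ?powR_gt0 ?ltr0n //.
    by case/andP: ha.
  by rewrite ltr_wpDl // divr_ge0 ?addr_ge0 // ltW.
move=> N1 N2 h1 h2; case: (leP N1 N2) => h.
  exact: main_le.
rewrite Tsym (mulrC N1 N2) mulrAC; apply: main_le => //; exact: ltW.
Qed.
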